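(* Let $h$ be smooth near $(0,0)$ with Taylor expansion $h(x,y)=a^2x^2+b^2y^2+\sum_{m+n\ge3}h_{m,n}x^my^n$, $a,b>0$, and let $z$ be a $C^3$ solution of $z_x^2+z_y^2=h$ near $(0,0)$ with $z(0,0)=0$. If $a\ne b$, then $z(x,y)=\frac12(\pm ax^2\pm by^2)+O((|x|+|y|)^3)$ for some choice of signs. If $a=b$, the same conclusion holds after a change of coordinates $(x,y)\mapsto(x\cos\xi+y\sin\xi,\,-x\sin\xi+y\cos\xi)$ for some angle $\xi$. *)

(* Defs.v *)
From Stdlib Require Import Reals.
From Coquelicot Require Import Coquelicot.
Open Scope R_scope.

Definition dx (f : R -> R -> R) : R -> R -> R :=
  fun x y => Derive (fun t => f t y) x.
Definition dy (f : R -> R -> R) : R -> R -> R :=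
  fun x y => Derive (fun t => f x t) y.

Definition sq (r : R) (x y : R) : Prop := Rabs x < r /\ Rabs y < r.

Definition cont2 (f : R -> R -> R) (x y : R) : Prop :=
  continuous (fun p : R * R => f (fst p) (snd p)) (x, y).

Fixpoint Ck (k : nat) (U : R -> R -> Prop) (f : R -> R -> R) : Prop :=
  match k with
  | O => forall x y, U x y -> cont2 f x y
  | S k' =>
      (forall x y, U x y -> cont2 f x y) /\
      (forall x y, U x y ->
         ex_derive (fun t => f t y) x /\ ex_derive (fun t => f x t) y) /\
      Ck k' U (dx f) /\ Ck k' U (dy f)
  end.

Definition Cinf (U : R -> R -> Prop) (f : R -> R -> R) : Prop :=
  forall k, Ck k U f.

Definition bigO3 (g : R -> R -> R) : Prop :=
  exists C delta, 0 < delta /\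
    forall x y, Rabs x + Rabs y < delta ->
      Rabs (g x y) <= C * (Rabs x + Rabs y) ^ 3.

Definition pm1 (s : R) : Prop := s = 1 \/ s = -1.

(* Main.v *)
Require Import Defs.
From Stdlib Require Import Reals Lra Psatz.
From Coquelicot Require Import Coquelicot.
Open Scope R_scope.
Lemma isd_minus (f g : R -> R) x df dg :
  is_derive f x df -> is_derive g x dg -> is_derive (fun t => f t - g t) x (df - dg).
Proof. intros H1 H2. exact (is_derive_minus f g x df dg H1 H2). Qed.

Lemma isd_eq (f : R -> R) x l l' : is_derive f x l -> l = l' -> is_derive f x l'.
Proof. intros H ->. exact H. Qed.

Lemma mvt_bound (f df : R -> R) (d C : R) (k : nat) :
  0 < d -> 0 <= C ->
  (forall t, Rabs t < d -> is_derive f t (df t)) ->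
  (forall t, Rabs t < d -> Rabs (df t) <= C * Rabs t ^ k) ->
  f 0 = 0 -> forall y, Rabs y < d -> Rabs (f y) <= C * Rabs y ^ (S k).
Proof.
  intros Hd HC Hder Hb H0 y Hy.
  assert (Hin : forall c, Rmin 0 y <= c <= Rmax 0 y -> Rabs c <= Rabs y).
  { intros c Hc. unfold Rmin, Rmax in Hc.
    destruct (Rle_dec 0 y); unfold Rabs; destruct (Rcase_abs c); destruct (Rcase_abs y); lra. }
  destruct (MVT_gen f 0 y df) as [c [Hc Heq]].
  - intros x Hx. apply Hder. apply Rle_lt_trans with (Rabs y); auto.
    apply Hin; lra.
  - intros x Hx. apply continuity_pt_filterlim.
    apply (ex_derive_continuous f x). exists (df x). apply Hder.
    pose proof (Hin x Hx).
    apply Rle_lt_trans with (Rabs y); auto.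
  - rewrite H0 in Heq. replace (f y) with (df c * y) by lra.
    rewrite Rabs_mult. simpl.
    assert (Hcy := Hin c Hc).
    assert (Hc' : Rabs c < d) by lra.
    specialize (Hb c Hc').
    assert (Rabs c ^ k <= Rabs y ^ k) by (apply pow_incr; split; [apply Rabs_pos|exact Hcy]).
    assert (0 <= Rabs y) by apply Rabs_pos.
    assert (C * Rabs c ^ k <= C * Rabs y ^ k) by (apply Rmult_le_compat_l; auto).
    assert (Rabs (df c) * Rabs y <= C * Rabs y ^ k * Rabs y) by (apply Rmult_le_compat_r; lra).
    nra.
Qed.

Lemma taylor1 (g g1 : R -> R) d M : 0 < d -> 0 <= M ->
  (forall t, Rabs t < d -> is_derive g t (g1 t)) ->
  (forall t, Rabs t < d -> Rabs (g1 t) <= M) ->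
  forall y, Rabs y < d -> Rabs (g y - g 0) <= M * Rabs y.
Proof.
  intros Hd HM Hder Hb y Hy.
  replace (M * Rabs y) with (M * Rabs y ^ 1) by ring.
  apply (mvt_bound (fun t => g t - g 0) g1 d M 0 Hd HM); auto.
  - intros t Ht. refine (isd_eq _ _ (g1 t - 0) _ _ _); [|lra].
    apply isd_minus; auto. apply (is_derive_const (g 0) t).
  - intros t Ht. rewrite pow_O, Rmult_1_r. auto.
  - ring.
Qed.

Lemma taylor2 (g g1 g2 : R -> R) d M : 0 < d -> 0 <= M ->
  (forall t, Rabs t < d -> is_derive g t (g1 t) /\ is_derive g1 t (g2 t)) ->
  (forall t, Rabs t < d -> Rabs (g2 t) <= M) ->
  forall y, Rabs y < d -> Rabs (g y - g 0 - g1 0 * y) <= M * Rabs y ^ 2.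
Proof.
  intros Hd HM Hder Hb y Hy.
  apply (mvt_bound (fun t => g t - g 0 - g1 0 * t) (fun t => g1 t - g1 0) d M 1 Hd HM); auto.
  - intros t Ht. destruct (Hder t Ht) as [H1 H2].
    refine (isd_eq _ _ (g1 t - 0 - g1 0 * 1) _ _ _); [|lra].
    apply isd_minus. apply isd_minus; auto. apply (is_derive_const (g 0) t).
    apply is_derive_scal. apply (is_derive_id t).
  - intros t Ht. rewrite pow_1. apply (taylor1 g1 g2 d M); auto.
    intros u Hu; apply Hder; auto.
  - ring.
Qed.

Lemma taylor3 (g g1 g2 g3 : R -> R) d M : 0 < d -> 0 <= M ->
  (forall t, Rabs t < d -> is_derive g t (g1 t) /\ is_derive g1 t (g2 t) /\ is_derive g2 t (g3 t)) ->
  (forall t, Rabs t < d -> Rabs (g3 t) <= M) ->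
  forall y, Rabs y < d -> Rabs (g y - g 0 - g1 0 * y - g2 0 / 2 * y ^ 2) <= M * Rabs y ^ 3.
Proof.
  intros Hd HM Hder Hb y Hy.
  apply (mvt_bound (fun t => g t - g 0 - g1 0 * t - g2 0 / 2 * t ^ 2)
           (fun t => g1 t - g1 0 - g2 0 * t) d M 2 Hd HM); auto.
  - intros t Ht. destruct (Hder t Ht) as [H1 [H2 H3]].
    refine (isd_eq _ _ (g1 t - 0 - g1 0 * 1 - g2 0 / 2 * (INR 2 * 1 * t ^ Init.Nat.pred 2)) _ _ _).
    2:{ simpl; lra. }
    apply isd_minus. 2: apply is_derive_scal; apply is_derive_pow; apply (is_derive_id t).
    apply isd_minus. apply isd_minus; auto. apply (is_derive_const (g 0) t).
    apply is_derive_scal. apply (is_derive_id t).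
  - intros t Ht. apply (taylor2 g1 g2 g3 d M); auto.
    intros u Hu; apply Hder; auto.
  - lra.
Qed.

Lemma loc_of (P : R -> Prop) e t0 : 0 < e -> (forall t, Rabs (t - t0) < e -> P t) -> locally t0 P.
Proof. intros He H. exists (mkposreal e He). intros t Ht. apply H. exact Ht. Qed.

Lemma isd_mult (f g : R -> R) x df dg :
  is_derive f x df -> is_derive g x dg -> is_derive (fun t => f t * g t) x (df * g x + f x * dg).
Proof. intros H1 H2. exact (is_derive_mult f g x df dg H1 H2 Rmult_comm). Qed.

Lemma isd_plus (f g : R -> R) x df dg :
  is_derive f x df -> is_derive g x dg -> is_derive (fun t => f t + g t) x (df + dg).
Proof. intros H1 H2. exact (is_derive_plus f g x df dg H1 H2). Qed.

Lemma D1 (f u v : R -> R) t0 du dv :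
  locally t0 (fun t => f t = u t ^ 2 + v t ^ 2) ->
  is_derive u t0 du -> is_derive v t0 dv ->
  Derive f t0 = 2 * u t0 * du + 2 * v t0 * dv.
Proof.
  intros Hl Hu Hv. rewrite (Derive_ext_loc f (fun t => u t ^ 2 + v t ^ 2) t0 Hl).
  apply is_derive_unique.
  refine (isd_eq _ _ (INR 2 * du * u t0 ^ Init.Nat.pred 2 + INR 2 * dv * v t0 ^ Init.Nat.pred 2) _ _ _).
  - apply isd_plus; apply is_derive_pow; auto.
  - simpl. lra.
Qed.

Lemma D2 (F u U v V : R -> R) du dU dv dV :
  locally 0 (fun t => F t = 2 * u t * U t + 2 * v t * V t) ->
  is_derive u 0 du -> is_derive U 0 dU -> is_derive v 0 dv -> is_derive V 0 dV ->
  u 0 = 0 -> v 0 = 0 ->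
  Derive F 0 = 2 * du * U 0 + 2 * dv * V 0.
Proof.
  intros Hl Hu HU Hv HV Hu0 Hv0.
  rewrite (Derive_ext_loc F (fun t => 2 * u t * U t + 2 * v t * V t) 0 Hl).
  apply is_derive_unique.
  refine (isd_eq _ _ ((2 * du * U 0 + 2 * u 0 * dU) + (2 * dv * V 0 + 2 * v 0 * dV)) _ _ _).
  - apply isd_plus.
    + apply (isd_mult (fun t => 2 * u t) U). apply is_derive_scal; auto. auto.
    + apply (isd_mult (fun t => 2 * v t) V). apply is_derive_scal; auto. auto.
  - rewrite Hu0, Hv0. lra.
Qed.

Lemma cont_bound (f : R -> R -> R) :
  continuity_2d_pt f 0 0 ->
  exists d M, 0 < d /\ 0 <= M /\ forall u v, Rabs u < d -> Rabs v < d -> Rabs (f u v) <= M.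
Proof.
  intros H. destruct (H (mkposreal 1 Rlt_0_1)) as [d Hd].
  exists d, (Rabs (f 0 0) + 1). split; [apply cond_pos|]. split.
  - pose proof (Rabs_pos (f 0 0)); lra.
  - intros u v Hu Hv. specialize (Hd u v). rewrite !Rminus_0_r in Hd.
    specialize (Hd Hu Hv). simpl in Hd.
    pose proof (Rabs_triang_inv (f u v) (f 0 0)). lra.
Qed.

Lemma c2 f : cont2 f 0 0 -> continuity_2d_pt f 0 0.
Proof. intros H. apply continuity_2d_pt_filterlim. exact H. Qed.

Lemma taylor2d (z : R -> R -> R) r : 0 < r -> Ck 3 (sq r) z ->
  bigO3 (fun x y => z x y - z 0 0 - dx z 0 0 * x - dy z 0 0 * y
     - / 2 * (dx (dx z) 0 0 * x ^ 2 + 2 * dx (dy z) 0 0 * x * y + dy (dy z) 0 0 * y ^ 2)).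
Proof.
  intros Hr Hz.
  destruct Hz as [Cz [Dz [[Czx [Dzx [[Czxx [Dzxx [Czxxx Czyxx]]] [Czyx [Dzyx [Czxyx Czyyx]]]]]]
                         [Czy [Dzy [[Czxy [Dzxy [Czxxy Czyxy]]] [Czyy [Dzyy [Czxyy Czyyy]]]]]]]]].
  assert (S0 : sq r 0 0) by (unfold sq; rewrite Rabs_R0; lra).
  destruct (cont_bound _ (c2 _ (Czxxx 0 0 S0))) as [d1 [M1 [Hd1 [HM1 B1]]]].
  destruct (cont_bound _ (c2 _ (Czyyy 0 0 S0))) as [d2 [M2 [Hd2 [HM2 B2]]]].
  destruct (cont_bound _ (c2 _ (Czxxy 0 0 S0))) as [d3 [M3 [Hd3 [HM3 B3]]]].
  destruct (cont_bound _ (c2 _ (Czxyy 0 0 S0))) as [d4 [M4 [Hd4 [HM4 B4]]]].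
  set (d := Rmin r (Rmin (Rmin d1 d2) (Rmin d3 d4))).
  assert (Hd : 0 < d).
  { unfold d. repeat apply Rmin_glb_lt; auto. }
  assert (Hdr : d <= r) by apply Rmin_l.
  assert (Hdd1 : d <= d1). { unfold d. eapply Rle_trans; [apply Rmin_r|]. eapply Rle_trans; [apply Rmin_l|]. apply Rmin_l. }
  assert (Hdd2 : d <= d2). { unfold d. eapply Rle_trans; [apply Rmin_r|]. eapply Rle_trans; [apply Rmin_l|]. apply Rmin_r. }
  assert (Hdd3 : d <= d3). { unfold d. eapply Rle_trans; [apply Rmin_r|]. eapply Rle_trans; [apply Rmin_r|]. apply Rmin_l. }
  assert (Hdd4 : d <= d4). { unfold d. eapply Rle_trans; [apply Rmin_r|]. eapply Rle_trans; [apply Rmin_r|]. apply Rmin_r. }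
  set (M := M1 + M2 + M3 + M4).
  assert (HM : 0 <= M) by (unfold M; lra).
  exists (4 * M), d. split; auto.
  intros x y Hxy.
  assert (Hx : Rabs x < d) by (pose proof (Rabs_pos y); lra).
  assert (Hy : Rabs y < d) by (pose proof (Rabs_pos x); lra).
  assert (Sq : forall u v, Rabs u < d -> Rabs v < d -> sq r u v).
  { intros u v Hu Hv. unfold sq; lra. }
  assert (EA := taylor3 (fun t => z x t) (fun t => dy z x t) (fun t => dy (dy z) x t)
     (fun t => dy (dy (dy z)) x t) d M Hd HM).
  assert (EA' : Rabs (z x y - z x 0 - dy z x 0 * y - dy (dy z) x 0 / 2 * y ^ 2) <= M * Rabs y ^ 3).
  { apply EA; [| |exact Hy].
    - intros t Ht. assert (S1 := Sq x t Hx Ht). split; [|split].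
      + apply (Derive_correct (fun u => z x u)). exact (proj2 (Dz x t S1)).
      + apply (Derive_correct (fun u => dy z x u)). exact (proj2 (Dzy x t S1)).
      + apply (Derive_correct (fun u => dy (dy z) x u)). exact (proj2 (Dzyy x t S1)).
    - intros t Ht. apply Rle_trans with M2. apply B2; lra. unfold M; lra. }
  clear EA.
  assert (EB := taylor3 (fun t => z t 0) (fun t => dx z t 0) (fun t => dx (dx z) t 0)
     (fun t => dx (dx (dx z)) t 0) d M Hd HM).
  assert (EB' : Rabs (z x 0 - z 0 0 - dx z 0 0 * x - dx (dx z) 0 0 / 2 * x ^ 2) <= M * Rabs x ^ 3).
  { apply EB; [| |exact Hx].
    - intros t Ht. assert (S1 := Sq t 0 Ht ltac:(rewrite Rabs_R0; lra)). split; [|split].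
      + apply (Derive_correct (fun u => z u 0)). exact (proj1 (Dz t 0 S1)).
      + apply (Derive_correct (fun u => dx z u 0)). exact (proj1 (Dzx t 0 S1)).
      + apply (Derive_correct (fun u => dx (dx z) u 0)). exact (proj1 (Dzxx t 0 S1)).
    - intros t Ht. apply Rle_trans with M1. apply B1; rewrite ?Rabs_R0; lra. unfold M; lra. }
  clear EB.
  assert (EC := taylor2 (fun t => dy z t 0) (fun t => dx (dy z) t 0) (fun t => dx (dx (dy z)) t 0)
     d M Hd HM).
  assert (EC' : Rabs (dy z x 0 - dy z 0 0 - dx (dy z) 0 0 * x) <= M * Rabs x ^ 2).
  { apply EC; [| |exact Hx].
    - intros t Ht. assert (S1 := Sq t 0 Ht ltac:(rewrite Rabs_R0; lra)). split.
      + apply (Derive_correct (fun u => dy z u 0)). exact (proj1 (Dzy t 0 S1)).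
      + apply (Derive_correct (fun u => dx (dy z) u 0)). exact (proj1 (Dzxy t 0 S1)).
    - intros t Ht. apply Rle_trans with M3. apply B3; rewrite ?Rabs_R0; lra. unfold M; lra. }
  clear EC.
  assert (ED := taylor1 (fun t => dy (dy z) t 0) (fun t => dx (dy (dy z)) t 0) d M Hd HM).
  assert (ED' : Rabs (dy (dy z) x 0 - dy (dy z) 0 0) <= M * Rabs x).
  { apply ED; [| |exact Hx].
    - intros t Ht. assert (S1 := Sq t 0 Ht ltac:(rewrite Rabs_R0; lra)).
      apply (Derive_correct (fun u => dy (dy z) u 0)). exact (proj1 (Dzyy t 0 S1)).
    - intros t Ht. apply Rle_trans with M4. apply B4; rewrite ?Rabs_R0; lra. unfold M; lra. }
  clear ED.
  set (eA := z x y - z x 0 - dy z x 0 * y - dy (dy z) x 0 / 2 * y ^ 2) in *.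
  set (eB := z x 0 - z 0 0 - dx z 0 0 * x - dx (dx z) 0 0 / 2 * x ^ 2) in *.
  set (eC := dy z x 0 - dy z 0 0 - dx (dy z) 0 0 * x) in *.
  set (eD := dy (dy z) x 0 - dy (dy z) 0 0) in *.
  match goal with |- Rabs ?E <= _ => replace E with (eA + eB + y * eC + y ^ 2 / 2 * eD) end.
  2:{ unfold eA, eB, eC, eD. field. }
  set (X := Rabs x) in *. set (Y := Rabs y) in *.
  assert (HX : 0 <= X) by apply Rabs_pos. assert (HY : 0 <= Y) by apply Rabs_pos.
  assert (Hb : Rabs (eA + eB + y * eC + y ^ 2 / 2 * eD) <= M * Y ^ 3 + M * X ^ 3 + Y * (M * X ^ 2) + Y ^ 2 / 2 * (M * X)).
  { eapply Rle_trans. apply Rabs_triang.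
    eapply Rle_trans. apply Rplus_le_compat_r. apply Rabs_triang.
    eapply Rle_trans. apply Rplus_le_compat_r. apply Rplus_le_compat_r. apply Rabs_triang.
    rewrite !Rabs_mult.
    replace (Rabs (y ^ 2 / 2)) with (Y ^ 2 / 2).
    2:{ unfold Y, Rdiv. rewrite Rabs_mult, <- RPow_abs, (Rabs_pos_eq (/2)) by lra. reflexivity. }
    apply Rplus_le_compat; [apply Rplus_le_compat; [apply Rplus_le_compat|]|]; auto.
    - apply Rmult_le_compat_l; auto.
    - apply Rmult_le_compat_l; auto. nra. }
  eapply Rle_trans; [exact Hb|].
  assert (0 <= M * X ^ 3) by (apply Rmult_le_pos; auto; apply pow_le; auto).
  assert (0 <= M * (X ^ 2 * Y)) by (apply Rmult_le_pos; auto; apply Rmult_le_pos; auto; apply pow_le; auto).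
  assert (0 <= M * (X * Y ^ 2)) by (apply Rmult_le_pos; auto; apply Rmult_le_pos; auto; apply pow_le; auto).
  assert (0 <= M * Y ^ 3) by (apply Rmult_le_pos; auto; apply pow_le; auto).
  replace ((X + Y) ^ 3) with (X^3 + 3 * (X^2*Y) + 3 * (X * Y^2) + Y^3) by ring.
  nra.
Qed.
Lemma angle a p q : 0 < a -> p ^ 2 + q ^ 2 = a ^ 2 ->
  exists xi, a * (cos xi ^ 2 - sin xi ^ 2) = p /\ a * (2 * sin xi * cos xi) = q.
Proof.
  intros Ha H.
  set (c := p / a).
  assert (Hc2 : c² + (q / a)² = 1).
  { unfold c, Rsqr. replace (p * p) with (p^2) by ring. replace (q*q) with (q^2) by ring. apply (Rmult_eq_reg_r (a*a)); [|nra]. field_simplify; [|lra]. rewrite <- H. field. }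
  assert (Hc : -1 <= c <= 1).
  { assert (0 <= (q/a)²) by apply Rle_0_sqr. unfold Rsqr in *. nra. }
  set (th := acos c).
  assert (Cth : cos th = c) by (apply cos_acos; exact Hc).
  assert (Sth : sin th = sqrt (1 - c²)) by (apply sin_acos; exact Hc).
  assert (E1 : 1 - c² = (q / a)²) by lra.
  rewrite E1 in Sth.
  destruct (Rle_or_lt 0 q) as [Hq | Hq].
  - exists (th / 2).
    rewrite sqrt_Rsqr in Sth by (unfold Rdiv; apply Rmult_le_pos; [lra| left; apply Rinv_0_lt_compat; lra]).
    assert (X1 := cos_2a (th/2)). assert (X2 := sin_2a (th/2)).
    replace (2 * (th / 2)) with th in X1, X2 by field.
    split.
    + replace p with (a * c) by (unfold c; field; lra). rewrite <- Cth, X1. simpl. ring.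
    + replace q with (a * (q / a)) by (field; lra). rewrite <- Sth, X2. ring.
  - exists (- (th / 2)).
    replace ((q / a)²) with ((- q / a)²) in Sth by (unfold Rsqr; field; lra).
    rewrite sqrt_Rsqr in Sth by (unfold Rdiv; apply Rmult_le_pos; [lra| left; apply Rinv_0_lt_compat; lra]).
    assert (X1 := cos_2a (- (th/2))). assert (X2 := sin_2a (- (th/2))).
    replace (2 * - (th / 2)) with (- th) in X1, X2 by field.
    rewrite cos_neg in X1. rewrite sin_neg in X2.
    split.
    + replace p with (a * c) by (unfold c; field; lra). rewrite <- Cth, X1. simpl. ring.
    + replace q with (- (a * (- q / a))) by (field; lra). rewrite <- Sth, <- X2. ring.
Qed.

Lemma bigO3_ext (f g : R -> R -> R) : bigO3 f -> (forall x y, f x y = g x y) -> bigO3 g.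
Proof.
  intros [C [d [Hd H]]] E. exists C, d. split; auto.
  intros x y Hxy. rewrite <- E. apply H; auto.
Qed.

Lemma pm1_of p a : 0 < a -> p ^ 2 = a ^ 2 -> pm1 (p / a).
Proof.
  intros Ha H. unfold pm1.
  assert ((p - a) * (p + a) = 0) by nra.
  destruct (Rmult_integral _ _ H0).
  - left. replace p with a by lra. field. lra.
  - right. replace p with (- a) by lra. field. lra.
Qed.

Theorem proposition4p1 (h z : R -> R -> R) (a b : R) :
  0 < a -> 0 < b ->
  (exists r, 0 < r /\ Cinf (sq r) h) ->
  h 0 0 = 0 ->
  dx h 0 0 = 0 -> dy h 0 0 = 0 ->
  dx (dx h) 0 0 = 2 * a ^ 2 ->
  dx (dy h) 0 0 = 0 ->
  dy (dy h) 0 0 = 2 * b ^ 2 ->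
  (exists r, 0 < r /\ Ck 3 (sq r) z /\
     forall x y, sq r x y -> (dx z x y) ^ 2 + (dy z x y) ^ 2 = h x y) ->
  z 0 0 = 0 ->
  (a <> b ->
     exists s1 s2, pm1 s1 /\ pm1 s2 /\
       bigO3 (fun x y => z x y - / 2 * (s1 * a * x ^ 2 + s2 * b * y ^ 2))) /\
  (a = b ->
     exists xi s1 s2, pm1 s1 /\ pm1 s2 /\
       bigO3 (fun x y =>
         let u := x * cos xi + y * sin xi in
         let v := - x * sin xi + y * cos xi in
         z x y - / 2 * (s1 * a * u ^ 2 + s2 * b * v ^ 2))).
Proof.
  intros Ha Hb _ Hh0 _ _ Hxx Hxy Hyy [r [Hr [Hz Hid]]] Hz0.
  assert (BO := taylor2d z r Hr Hz).
  destruct Hz as [Cz [Dz [[Czx [Dzx [[Czxx [Dzxx [Czxxx Czyxx]]] [Czyx [Dzyx [Czxyx Czyyx]]]]]]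
                         [Czy [Dzy [[Czxy [Dzxy [Czxxy Czyxy]]] [Czyy [Dzyy [Czxyy Czyyy]]]]]]]]].
  assert (S0 : sq r 0 0) by (unfold sq; rewrite Rabs_R0; lra).
  assert (Zx0 : dx z 0 0 = 0 /\ dy z 0 0 = 0).
  { pose proof (Hid 0 0 S0) as E. rewrite Hh0 in E. split; nra. }
  destruct Zx0 as [Zx0 Zy0].
  assert (Sch : dx (dy z) 0 0 = dy (dx z) 0 0).
  { apply (Schwarz z 0 0).
    - exists (mkposreal r Hr). intros u v Hu Hv. simpl in Hu, Hv.
      rewrite !Rminus_0_r in Hu, Hv.
      assert (S : sq r u v) by (split; auto).
      split; [exact (proj1 (Dz u v S))|].
      split; [exact (proj2 (Dz u v S))|].
      split; [exact (proj1 (Dzy u v S))|exact (proj2 (Dzx u v S))].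
    - exact (c2 _ (Czxy 0 0 S0)).
    - exact (c2 _ (Czyx 0 0 S0)). }
  set (p := dx (dx z) 0 0) in *.
  set (q := dx (dy z) 0 0) in *.
  set (s := dy (dy z) 0 0) in *.
  assert (Sqt : forall t w, Rabs (w - t) < r - Rabs t -> sq r w 0).
  { intros t w H. split; [|rewrite Rabs_R0; lra].
    pose proof (Rabs_triang_inv w t). lra. }
  assert (Sqt2 : forall t w, Rabs (w - t) < r - Rabs t -> sq r 0 w).
  { intros t w H. split; [rewrite Rabs_R0; lra|].
    pose proof (Rabs_triang_inv w t). lra. }
  assert (Sqt3 : forall t w, Rabs t < r -> Rabs (w - 0) < r - Rabs t -> sq r t w).
  { intros t w Ht H. rewrite Rminus_0_r in H. split; auto.
    pose proof (Rabs_pos t). lra. }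
  assert (E1 : dx (dx h) 0 0 = 2 * p * p + 2 * q * q).
  { unfold dx at 1.
    apply (D2 (fun t => dx h t 0) (fun t => dx z t 0) (fun t => dx (dx z) t 0)
              (fun t => dy z t 0) (fun t => dx (dy z) t 0)
              p (Derive (fun t => dx (dx z) t 0) 0) q (Derive (fun t => dx (dy z) t 0) 0)).
    - apply (loc_of _ r); auto. intros t Ht. rewrite Rminus_0_r in Ht.
      unfold dx at 1.
      apply (D1 (fun u => h u 0) (fun w => dx z w 0) (fun w => dy z w 0) t).
      + apply (loc_of _ (r - Rabs t)); [lra|]. intros w Hw.
        symmetry. apply Hid. exact (Sqt t w Hw).
      + apply (Derive_correct (fun w => dx z w 0)). apply (proj1 (Dzx t 0 (Sqt t t ltac:(rewrite Rminus_diag, Rabs_R0; lra)))).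
      + apply (Derive_correct (fun w => dy z w 0)). apply (proj1 (Dzy t 0 (Sqt t t ltac:(rewrite Rminus_diag, Rabs_R0; lra)))).
    - apply (Derive_correct (fun w => dx z w 0)). exact (proj1 (Dzx 0 0 S0)).
    - apply (Derive_correct (fun w => dx (dx z) w 0)). exact (proj1 (Dzxx 0 0 S0)).
    - apply (Derive_correct (fun w => dy z w 0)). exact (proj1 (Dzy 0 0 S0)).
    - apply (Derive_correct (fun w => dx (dy z) w 0)). exact (proj1 (Dzxy 0 0 S0)).
    - exact Zx0.
    - exact Zy0. }
  assert (E2 : dy (dy h) 0 0 = 2 * q * q + 2 * s * s).
  { unfold dy at 1. rewrite Sch.
    apply (D2 (fun t => dy h 0 t) (fun t => dx z 0 t) (fun t => dy (dx z) 0 t)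
              (fun t => dy z 0 t) (fun t => dy (dy z) 0 t)
              (dy (dx z) 0 0) (Derive (fun t => dy (dx z) 0 t) 0) s (Derive (fun t => dy (dy z) 0 t) 0)).
    - apply (loc_of _ r); auto. intros t Ht. rewrite Rminus_0_r in Ht.
      unfold dy at 1.
      apply (D1 (fun u => h 0 u) (fun w => dx z 0 w) (fun w => dy z 0 w) t).
      + apply (loc_of _ (r - Rabs t)); [lra|]. intros w Hw.
        symmetry. apply Hid. exact (Sqt2 t w Hw).
      + apply (Derive_correct (fun w => dx z 0 w)). apply (proj2 (Dzx 0 t (Sqt2 t t ltac:(rewrite Rminus_diag, Rabs_R0; lra)))).
      + apply (Derive_correct (fun w => dy z 0 w)). apply (proj2 (Dzy 0 t (Sqt2 t t ltac:(rewrite Rminus_diag, Rabs_R0; lra)))).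
    - apply (Derive_correct (fun w => dx z 0 w)). exact (proj2 (Dzx 0 0 S0)).
    - apply (Derive_correct (fun w => dy (dx z) 0 w)). exact (proj2 (Dzyx 0 0 S0)).
    - apply (Derive_correct (fun w => dy z 0 w)). exact (proj2 (Dzy 0 0 S0)).
    - apply (Derive_correct (fun w => dy (dy z) 0 w)). exact (proj2 (Dzyy 0 0 S0)).
    - exact Zx0.
    - exact Zy0. }
  assert (E3 : dx (dy h) 0 0 = 2 * p * dy (dx z) 0 0 + 2 * q * s).
  { unfold dx at 1.
    apply (D2 (fun t => dy h t 0) (fun t => dx z t 0) (fun t => dy (dx z) t 0)
              (fun t => dy z t 0) (fun t => dy (dy z) t 0)
              p (Derive (fun t => dy (dx z) t 0) 0) q (Derive (fun t => dy (dy z) t 0) 0)).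
    - apply (loc_of _ r); auto. intros t Ht. rewrite Rminus_0_r in Ht.
      unfold dy at 1.
      apply (D1 (fun u => h t u) (fun w => dx z t w) (fun w => dy z t w) 0).
      + apply (loc_of _ (r - Rabs t)); [lra|]. intros w Hw.
        symmetry. apply Hid. exact (Sqt3 t w Ht Hw).
      + apply (Derive_correct (fun w => dx z t w)). apply (proj2 (Dzx t 0 (Sqt3 t 0 Ht ltac:(rewrite Rminus_diag, Rabs_R0; lra)))).
      + apply (Derive_correct (fun w => dy z t w)). apply (proj2 (Dzy t 0 (Sqt3 t 0 Ht ltac:(rewrite Rminus_diag, Rabs_R0; lra)))).
    - apply (Derive_correct (fun w => dx z w 0)). exact (proj1 (Dzx 0 0 S0)).
    - apply (Derive_correct (fun w => dy (dx z) w 0)). exact (proj1 (Dzyx 0 0 S0)).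
    - apply (Derive_correct (fun w => dy z w 0)). exact (proj1 (Dzy 0 0 S0)).
    - apply (Derive_correct (fun w => dy (dy z) w 0)). exact (proj1 (Dzyy 0 0 S0)).
    - exact Zx0.
    - exact Zy0. }
  rewrite Hxx in E1. rewrite Hyy in E2. rewrite Hxy in E3.
  rewrite Hz0, Zx0, Zy0 in BO.
  clearbody p q s.
  assert (E3b : 0 = 2 * p * q + 2 * q * s) by (rewrite Sch at 1; exact E3). clear Sch E3.
  assert (Ka : p ^ 2 + q ^ 2 = a ^ 2) by nra.
  assert (Kb : q ^ 2 + s ^ 2 = b ^ 2) by nra.
  assert (Kc : q * (p + s) = 0) by nra.
  split.
  - intros Hab.
    assert (Hq : q = 0).
    { destruct (Rmult_integral _ _ Kc) as [H|H]; auto. exfalso.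
      assert (a ^ 2 = b ^ 2) by (replace s with (- p) in Kb by lra; nra).
      assert ((a - b) * (a + b) = 0) by nra.
      destruct (Rmult_integral _ _ H1); lra. }
    subst q.
    exists (p / a), (s / b). split; [apply pm1_of; nra|]. split; [apply pm1_of; nra|].
    apply (bigO3_ext _ _ BO). intros x y. field. lra.
  - intros Hab. subst b.
    destruct (Req_dec q 0) as [Hq|Hq].
    + subst q. exists 0, (p / a), (s / a).
      split; [apply pm1_of; nra|]. split; [apply pm1_of; nra|].
      apply (bigO3_ext _ _ BO). intros x y. cbv zeta. rewrite cos_0, sin_0. field. lra.
    + assert (Hs : s = - p).
      { destruct (Rmult_integral _ _ Kc) as [H|H]; [contradiction|lra]. }
      subst s.
      destruct (angle a p q Ha Ka) as [xi [Ec Es]].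
      exists xi, 1, (-1). split; [left; reflexivity|]. split; [right; reflexivity|].
      apply (bigO3_ext _ _ BO). intros x y. cbv zeta. rewrite <- Ec, <- Es. ring.
Qed.
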